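(* Let $\lambda\in\mathbb R$. Each column sum of the matrix representing $(L^*+\lambda)^2$ with respect to the ordered basis $u^*_0,u^*_1,\dots,u^*_d$ of $\mathcal P_d(\mathbb R)$ equals $\lambda^2$.
   Context: Fix an integer $d\ge0$ and $r,s\in(-1,\infty)$. Write $(x)_i=x(x+1)\cdots(x+i-1)$, $(x)_0=1$. For $0\le i\le d$ put $\theta_i=(d-i)(d-i+r+s+1)$ (distinct) and $\theta^*_i=i$. Put $b^*_i=\frac{(d-i)(i-d-s)(2d-2i+r+s+2)_i}{(2d-2i+r+s)_{i+1}}$ ($0\le i\le d-1$), $c^*_i=\frac{i(i-d-r-1)(d-i+r+s+1)_{d-i}}{(d-i+r+s+2)_{d-i+1}}$ ($1\le i\le d$), $b^*_d=c^*_0=0$, $a^*_i=\theta^*_0-b^*_i-c^*_i$, $k^*_i=\frac{b^*_0\cdots b^*_{i-1}}{c^*_1\cdots c^*_i}$ ($0\le i\le d$). Put $c_i=i(i+r)$ and $\nu=\frac{\prod_{j=1}^d(\theta_0-\theta_j)}{c_1\cdots c_d}$. Let $\mathcal P_d(\mathbb R)$ be the real polynomials of degree at most $d$, each determined by its values at $\theta_0,\dots,\theta_d$. Let $L^*$ be the linear map on $\mathcal P_d(\mathbb R)$ with $(L^*f)(\theta_i)=b^*_i f(\theta_{i+1})+a^*_i f(\theta_i)+c^*_i f(\theta_{i-1})$ ($0\le i\le d$; terms with coefficient $b^*_d$ or $c^*_0$ omitted). Let $u^*_i\in\mathcal P_d(\mathbb R)$ be defined by $u^*_i(\theta_j)=0$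 for $j\neq i$ and $u^*_i(\theta_i)=\nu/k^*_i$; these form a basis. $\lambda$ denotes $\lambda$ times the identity map. *)

(* Defs.v *)
From HB Require Import structures.
From mathcomp Require Import all_boot all_order all_algebra.
From mathcomp Require Import reals.
Set Implicit Arguments. Unset Strict Implicit. Unset Printing Implicit Defensive.
Import Order.TTheory GRing.Theory Num.Theory.
Local Open Scope ring_scope.

Section DualHahn.
Variables (R : realType) (d : nat) (r s : R).

Definition poch (x : R) (i : nat) : R := \prod_(k < i) (x + k%:R).

(* theta_i = (d-i)(d-i+r+s+1) ; only used for i <= d (except multiplied by 0) *)
Definition theta (i : nat) : R := (d - i)%:R * ((d - i)%:R + r + s + 1).
Definition thetas (i : nat) : R := i%:R.

Definition bs (i : nat) : R :=
  if (i < d)%N then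
    (d - i)%:R * (i%:R - d%:R - s) * poch (2 * (d - i)%:R + r + s + 2) i
      / poch (2 * (d - i)%:R + r + s) i.+1
  else 0.

Definition cs (i : nat) : R :=
  if (0 < i)%N then
    i%:R * (i%:R - d%:R - r - 1) * poch ((d - i)%:R + r + s + 1) (d - i)
      / poch ((d - i)%:R + r + s + 2) (d - i).+1
  else 0.

Definition as_ (i : nat) : R := thetas 0 - bs i - cs i.

Definition ks (i : nat) : R :=
  (\prod_(k < i) bs k) / (\prod_(k < i) cs k.+1).

Definition cc (i : nat) : R := i%:R * (i%:R + r).

Definition nu : R :=
  (\prod_(1 <= j < d.+1) (theta 0 - theta j)) / (\prod_(1 <= j < d.+1) cc j).

(* right-hand side of (L* f)(theta_i); terms with b*_d, c*_0 vanish since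
   those coefficients are 0 *)
Definition Lstar_val (f : {poly R}) (i : nat) : R :=
  bs i * f.[theta i.+1] + as_ i * f.[theta i] + cs i * f.[theta i.-1].

End DualHahn.

(* Main.v *)
Require Import Defs.
From HB Require Import structures.
From mathcomp Require Import all_boot all_order all_algebra.
From mathcomp Require Import reals ring lra.
Import Order.TTheory GRing.Theory Num.Theory.
Local Open Scope ring_scope.

Section H.
Variables (R : realType) (d : nat) (r s : R).
Hypotheses (hr : -1 < r) (hs : -1 < s).

Lemma poch_gt0 (x : R) n : (forall k, (k < n)%N -> 0 < x + k%:R) -> 0 < poch x n.
Proof. move=> H; rewrite /poch; apply: prodr_gt0 => k _; exact: H. Qed.

Lemma nat_lt1 {m n} : (m < n)%N -> m%:R + 1 <= n%:R :> R.
Proof. by move=> h; rewrite natr1 ler_nat. Qed.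

Lemma bs_neq0 i : (i < d)%N -> bs d r s i != 0.
Proof.
have hr1 := hr; have hs1 := hs.
move=> hi; rewrite /bs hi.
have h1 : 0 < (d - i)%:R :> R by rewrite ltr0n subn_gt0.
have h1' : 1 <= (d - i)%:R :> R by rewrite ler1n subn_gt0.
have h2 := nat_lt1 hi.
have h3 : 0 < poch (2 * (d - i)%:R + r + s + 2) i.
  apply: poch_gt0 => k _; have : 0 <= k%:R :> R by []; lra.
have h4 : 0 < poch (2 * (d - i)%:R + r + s) i.+1.
  apply: poch_gt0 => k _; have : 0 <= k%:R :> R by []; lra.
have h5 : i%:R - d%:R - s < 0 by lra.
apply: mulf_neq0; first (apply: mulf_neq0; first apply: mulf_neq0).
all: by [apply: lt0r_neq0 | apply: ltr0_neq0 | apply: invr_neq0; apply: lt0r_neq0].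
Qed.

Lemma cs_neq0 i : (0 < i)%N -> (i <= d)%N -> cs d r s i != 0.
Proof.
have hr1 := hr; have hs1 := hs.
move=> h0 hi; rewrite /cs h0.
have h1 : 0 < i%:R :> R by rewrite ltr0n.
have h2 : i%:R <= d%:R :> R by rewrite ler_nat.
have h3 : 0 < poch ((d - i)%:R + r + s + 1) (d - i).
  apply: poch_gt0 => k hk.
  have : 1 <= (d - i)%:R :> R by rewrite ler1n; case: (d - i)%N hk.
  have : 0 <= k%:R :> R by []; lra.
have h4 : 0 < poch ((d - i)%:R + r + s + 2) (d - i).+1.
  apply: poch_gt0 => k _; have : 0 <= k%:R :> R by [].
  have : 0 <= (d - i)%:R :> R by []. lra.
have h5 : i%:R - d%:R - r - 1 < 0 by lra.
apply: mulf_neq0; first (apply: mulf_neq0; first apply: mulf_neq0).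
all: by [apply: lt0r_neq0 | apply: ltr0_neq0 | apply: invr_neq0; apply: lt0r_neq0].
Qed.

Lemma ksS k : ks d r s k.+1 = ks d r s k * bs d r s k / cs d r s k.+1.
Proof. rewrite /ks !big_ord_recr /= invfM; ring. Qed.

Lemma ks_neq0 k : (k <= d)%N -> ks d r s k != 0.
Proof.
move=> hk; rewrite /ks; apply: mulf_neq0; last apply: invr_neq0.
  apply/prodf_neq0 => i _; apply: bs_neq0; exact: leq_trans (ltn_ord i) hk.
apply/prodf_neq0 => i _; apply: cs_neq0 => //; exact: leq_trans (ltn_ord i) hk.
Qed.

Lemma nu_neq0 : nu d r s != 0.
Proof.
have hr1 := hr; have hs1 := hs.
rewrite /nu mulf_neq0 ?invr_neq0 //.
  rewrite prodf_seq_neq0; apply/allP => j; rewrite mem_index_iota => /andP[j1 j2].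
  apply/implyP => _; rewrite /theta subn0.
  have hb := nat_lt1 (_ : (d - j < d)%N).
  have hb' : (d - j)%:R + 1 <= d%:R :> R.
    apply: nat_lt1; rewrite ltn_subrL; apply/andP; split => //; exact: leq_trans j1 j2.
  have : 0 <= (d - j)%:R :> R by [].
  set a := d%:R; set b := (d - j)%:R => hb0.
  have -> : a * (a + r + s + 1) - b * (b + r + s + 1) = (a - b) * (a + b + r + s + 1) by ring.
  rewrite mulf_neq0 // gt_eqF //; lra.
rewrite prodf_seq_neq0; apply/allP => j; rewrite mem_index_iota => /andP[j1 j2].
apply/implyP => _; rewrite /cc mulf_neq0 // ?gt_eqF // ?ltr0n //.
have : 1 <= j%:R :> R by rewrite ler1n. lra.
Qed.

Lemma tele (f : {poly R}) :
  \sum_(k < d.+1) ks d r s k * Lstar_val d r s f k = 0.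
Proof.
set F := fun k => f.[theta d r s k].
set D := fun k => ks d r s k * bs d r s k * (F k.+1 - F k).
have E : forall k : 'I_d.+1, ks d r s k * Lstar_val d r s f k =
   D k - (if nat_of_ord k is k'.+1 then D k' else 0).
  case=> -[|k] hk /=.
    rewrite /Lstar_val /as_ /thetas /D /F /cs /=; ring.
  rewrite /Lstar_val /as_ /thetas /D /F /= ksS.
  have := @cs_neq0 k.+1 isT hk.
  set c := cs d r s k.+1 => hc.
  rewrite -/(F k.+1) -/(F k.+2) -/(F k); field => //.
rewrite (eq_bigr _ (fun k _ => E k)) sumrB big_ord_recr big_ord_recl /=.
have -> : D d = 0 by rewrite /D /bs ltnn mulr0 mul0r.
by rewrite addr0 add0r subrr.
Qed.
End H.

Theorem lemma2p4 (R : realType) (d : nat) (r s lam : R)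
  (hr : -1 < r) (hs : -1 < s)
  (Lstar : {poly R} -> {poly R})
  (HL : forall f : {poly R}, (size f <= d.+1)%N ->
        (size (Lstar f) <= d.+1)%N /\
        (forall i, (i <= d)%N -> (Lstar f).[theta d r s i] = Lstar_val d r s f i))
  (u : nat -> {poly R})
  (Hu : forall i, (i <= d)%N ->
        (size (u i) <= d.+1)%N /\
        (forall j, (j <= d)%N ->
           (u i).[theta d r s j] = if j == i then nu d r s / ks d r s i else 0))
  (M : 'M[R]_d.+1)
  (HM : forall j : 'I_d.+1,
        let g := Lstar (u j) + lam *: u j in
        Lstar g + lam *: g = \sum_(i < d.+1) M i j *: u i) :
  forall j : 'I_d.+1, \sum_(i < d.+1) M i j = lam ^+ 2.
Proof.
move=> j.
pose phi (f : {poly R}) := \sum_(k < d.+1) ks d r s k * f.[theta d r s k].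
have phiL : forall f : {poly R}, (size f <= d.+1)%N -> phi (Lstar f) = 0.
  move=> f hf; rewrite /phi -[RHS](@tele R d r s hr hs f); apply: eq_bigr => k _.
  by rewrite (HL f hf).2 // -ltnS.
have phiD : forall p q : {poly R}, phi (p + q) = phi p + phi q.
  move=> p q; rewrite /phi -big_split; apply: eq_bigr => k _.
  by rewrite hornerD mulrDr.
have phiZ : forall c (p : {poly R}), phi (c *: p) = c * phi p.
  move=> c p; rewrite /phi mulr_sumr; apply: eq_bigr => k _.
  by rewrite hornerZ mulrCA.
have phiu : forall i : 'I_d.+1, phi (u i) = nu d r s.
  move=> i; have hi : (i <= d)%N by rewrite -ltnS.
  rewrite /phi (bigD1 i) //= big1 => [|k hk].
    rewrite (Hu i hi).2 // eqxx addr0 mulrC -mulrA mulVf ?mulr1 //.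
    exact: ks_neq0.
  have hk' : (nat_of_ord k != nat_of_ord i) by [].
  rewrite (Hu i hi).2; last by rewrite -ltnS.
  by rewrite (negbTE hk') mulr0.
have su : (size (u j) <= d.+1)%N by apply: (Hu j _).1; rewrite -ltnS.
have sg : (size (Lstar (u j) + lam *: u j)%R <= d.+1)%N.
  apply: (leq_trans (size_polyD _ _)); rewrite geq_max (HL _ su).1 /=.
  exact: leq_trans (size_scale_leq _ _) su.
have Hsum : phi (\sum_(i < d.+1) M i j *: u i) = \sum_(i < d.+1) M i j * nu d r s.
  rewrite /phi; under eq_bigr do rewrite horner_sum mulr_sumr.
  rewrite exchange_big /=; apply: eq_bigr => i _.
  under eq_bigr => k _ do rewrite hornerZ mulrCA.
  by rewrite -mulr_sumr -/(phi (u i)) phiu.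
have := congr1 phi (HM j); rewrite /= phiD phiZ phiL // phiD phiZ phiL // phiu Hsum.
rewrite -mulr_suml add0r add0r => H.
apply: (mulIf (@nu_neq0 R d r s hr hs)); rewrite -H; ring.
Qed.
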